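(* For every finite graph $G$: (1) $\mathsf{cdeg}(G) \leq \widetilde{\omega}(G)\cdot(\mathsf{cideg}(G)-1)$; (2) $\widetilde{\omega}(G) \leq 2^{\mathsf{cdeg}(G)}$; (3) $\mathsf{cideg}(G) \leq \mathsf{cdeg}(G)+1$.
   Context: Two vertices of $G$ are equivalent if they lie in exactly the same maximal cliques of $G$. $\widetilde{\omega}(G)$ is the maximum over maximal cliques $K$ of the number of equivalence classes meeting $K$; $\mathsf{cideg}(G)$ is the maximum over vertices $v$ of the number of maximal cliques containing $v$; $\mathsf{cdeg}(G)$ (clique-degree) is the maximum degree of the graph whose vertices are the maximal cliques of $G$, two distinct maximal cliques adjacent iff they intersect. *)

(* Defs.v *)
From mathcomp Require Import all_boot.
Set Implicit Arguments. Unset Strict Implicit. Unset Printing Implicit Defensive.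

(* A finite simple graph: vertex type T : finType, adjacency e : rel T,
   assumed symmetric and irreflexive in the theorem. *)
Section CliqueParams.
Variables (T : finType) (e : rel T).

Definition clique (K : {set T}) : bool :=
  [forall x in K, forall y in K, (x != y) ==> e x y].

Definition mcliques : {set {set T}} := [set K | maxset clique K].

Definition cliques_of (v : T) : {set {set T}} := [set K in mcliques | v \in K].

Definition clique_equiv (u v : T) : bool := cliques_of u == cliques_of v.

Definition eq_classes : {set {set T}} :=
  equivalence_partition clique_equiv [set: T].

Definition wt_omega : nat :=
  \max_(K in mcliques) #|[set B in eq_classes | [exists x in B, x \in K]]|.

Definition cideg : nat := \max_(v : T) #|cliques_of v|.

(* clique-degree: max degree of the clique graph. *)
Definition cdeg : nat :=
  \max_(K in mcliques)
     #|[set K' in mcliques | (K' != K) && (K :&: K' != set0)]|.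

End CliqueParams.

(* Main.v *)
Require Import Defs.
From mathcomp Require Import all_boot.

Set Implicit Arguments. Unset Strict Implicit. Unset Printing Implicit Defensive.

Lemma card_big_setU' (I : Type) (T : finType) (r : seq I) (P : {pred I})
    (F : I -> {set T}) :
  (#|\bigcup_(i <- r | P i)  F i| <= \sum_(i <- r | P i) #|F i|)%N.
Proof.
elim/big_ind2 : _ => // [|m A n B Am Bn]; first by rewrite cards0.
by rewrite (leq_trans (leq_card_setU _ _))// leq_add.
Qed.

Section Aux.
Variables (T : finType) (e : rel T).

Local Notation P := (eq_classes e).
Definition NK (K : {set T}) :=
  [set K' in mcliques e | (K' != K) && (K :&: K' != set0)].
Definition CK (K : {set T}) :=
  [set B in P | [exists x in B, x \in K]].

Lemma equivR : {in [set: T] & &, equivalence_rel (clique_equiv e)}.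
Proof.
move=> x y z _ _ _; rewrite /clique_equiv eqxx; split=> // /eqP ->; by [].
Qed.

Lemma partP : partition P [set: T].
Proof. exact: (equivalence_partitionP equivR). Qed.

Lemma tiP : trivIset P.
Proof. by case/and3P: partP. Qed.

Lemma coverP x : x \in cover P.
Proof. by case/and3P: partP => /eqP -> _ _; rewrite inE. Qed.

Lemma blockE x y : (y \in pblock P x) = clique_equiv e x y.
Proof. by rewrite (pblock_equivalence_partition equivR) ?inE. Qed.

Lemma rep_spec K B x0 : B \in CK K ->
  odflt x0 [pick x in B :&: K] \in B :&: K.
Proof.
rewrite inE => /andP[_ /existsP[x /andP[xB xK]]].
case: pickP => [y //|]; by move/(_ x); rewrite inE xB xK.
Qed.

Lemma equiv_cl x y : clique_equiv e x y -> cliques_of e x = cliques_of e y.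
Proof. by move/eqP. Qed.

Lemma part1 K : K \in mcliques e ->
  #|NK K| <= #|CK K| * (cideg e - 1).
Proof.
move=> KM.
have [->|[x0 x0K]] := set_0Vmem K.
  have -> : NK set0 = set0.
    by apply/setP=> K'; rewrite !inE set0I eqxx !andbF.
  by rewrite cards0.
set rep := fun B => odflt x0 [pick x in B :&: K].
have sub : NK K \subset \bigcup_(B in CK K) (cliques_of e (rep B) :\ K).
  apply/subsetP=> K'; rewrite inE => /andP[K'M /andP[neq /set0Pn[x]]].
  rewrite inE => /andP[xK xK'].
  have BP : pblock P x \in P by apply: pblock_mem; apply: coverP.
  have BC : pblock P x \in CK K.
    by rewrite inE BP; apply/existsP; exists x; rewrite mem_pblock coverP xK.
  apply/bigcupP; exists (pblock P x) => //.
  have := rep_spec x0 BC; rewrite inE => /andP[].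
  rewrite -/(rep _) blockE => /equiv_cl <- _.
  by rewrite in_setD1 neq /= /cliques_of inE K'M xK'.
apply: leq_trans (subset_leq_card sub) _.
apply: leq_trans (card_big_setU' _ _ _) _.
rewrite -sum_nat_const; apply: leq_sum => B BC.
have := rep_spec x0 BC; rewrite inE => /andP[_ rK].
rewrite -/(rep _).
have Kin : K \in cliques_of e (rep B) by rewrite inE KM rK.
have := cardsD1 K (cliques_of e (rep B)); rewrite Kin add1n => H.
have Hle : #|cliques_of e (rep B)| <= cideg e.
  exact: (@leq_bigmax _ (fun v => #|cliques_of e v|) (rep B)).
move: Hle; rewrite H => Hle; rewrite leq_subRL //.
by apply: leq_trans Hle.
Qed.

Lemma part2 K : K \in mcliques e -> #|CK K| <= 2 ^ #|NK K|.
Proof.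
move=> KM.
have [->|[x0 x0K]] := set_0Vmem K.
  have -> : CK set0 = set0.
    apply/setP=> B; rewrite !inE; case: (B \in P) => //=.
    by apply/existsP=> [[x /andP[_]]]; rewrite inE.
  by rewrite cards0.
set rep := fun B => odflt x0 [pick x in B :&: K].
set f := fun B => cliques_of e (rep B) :\ K.
have inj : {in CK K &, injective f}.
  move=> B1 B2 B1C B2C.
  have := rep_spec x0 B1C; have := rep_spec x0 B2C.
  rewrite !inE -/(rep B1) -/(rep B2) => /andP[y2B y2K] /andP[y1B y1K] eqf.
  have K1 : K \in cliques_of e (rep B1) by rewrite inE KM y1K.
  have K2 : K \in cliques_of e (rep B2) by rewrite inE KM y2K.
  have eqc : cliques_of e (rep B1) = cliques_of e (rep B2).
    by rewrite -(setD1K K1) -(setD1K K2); congr (_ |: _); exact: eqf.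
  have PB1 : B1 \in P by move: B1C; rewrite inE => /andP[].
  have PB2 : B2 \in P by move: B2C; rewrite inE => /andP[].
  rewrite -(def_pblock tiP PB1 y1B) -(def_pblock tiP PB2 y2B).
  apply/esym/same_pblock; first exact: tiP.
  by rewrite blockE /clique_equiv eqc.
rewrite -card_powerset -(card_in_imset inj); apply: subset_leq_card.
apply/subsetP=> _ /imsetP[B BC ->]; rewrite inE; apply/subsetP=> K'.
have := rep_spec x0 BC; rewrite inE -/(rep B) => /andP[_ rK].
rewrite /f !inE => /andP[neq /andP[K'M rK']].
rewrite K'M neq /=; apply/set0Pn; exists (rep B); by rewrite inE rK rK'.
Qed.

Lemma part3 v : #|cliques_of e v| <= (cdeg e).+1.
Proof.
have [->|[K Kin]] := set_0Vmem (cliques_of e v); first by rewrite cards0.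
have KM : K \in mcliques e by move: Kin; rewrite inE => /andP[].
have vK : v \in K by move: Kin; rewrite inE => /andP[].
rewrite (cardsD1 K) Kin add1n ltnS.
apply: leq_trans (_ : #|NK K| <= _).
  apply: subset_leq_card; apply/subsetP=> K'; rewrite !inE => /andP[neq /andP[K'M vK']].
  rewrite K'M neq /=; apply/set0Pn; exists v; by rewrite inE vK vK'.
exact: (@leq_bigmax_cond _ _ (fun K => #|NK K|) K KM).
Qed.

End Aux.

Theorem lemma5p3 (T : finType) (e : rel T)
    (e_sym : symmetric e) (e_irr : irreflexive e) :
  [/\ cdeg e <= wt_omega e * (cideg e - 1),
      wt_omega e <= 2 ^ cdeg e
    & cideg e <= (cdeg e).+1].
Proof.
split.
- apply/bigmax_leqP => K KM; apply: leq_trans (part1 KM) _.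
  apply: leq_mul => //.
  exact: (@leq_bigmax_cond _ _ (fun K => #|CK e K|) K KM).
- apply/bigmax_leqP => K KM; apply: leq_trans (part2 KM) _.
  rewrite leq_pexp2l //.
  exact: (@leq_bigmax_cond _ _ (fun K => #|NK e K|) K KM).
- by apply/bigmax_leqP => v _; apply: part3.
Qed.
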